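(* Let $x\in\widetilde{\mathcal{S}}$ and $0\le i\le\ell'$. (1) If $x\succ y$ for some $y\in\mathcal{S}^{\mathbf G}_i$, then for every $y_0\in\mathcal{S}^{\mathbf G}_i$, either $x$ and $y_0$ are incomparable or $x\succ y_0$. (2) If $x\prec y$ for some $y\in\mathcal{S}^{\mathbf G}_i$, then for every $y_0\in\mathcal{S}^{\mathbf G}_i$, either $x$ and $y_0$ are incomparable or $x\prec y_0$.
   Context: Let $F$ be a number field with adèles $\mathbb{A}$, $D$ a central division algebra over $F$ of degree $d>1$, $G'_m$ the group of invertible elements of $M_m(D)$, $G_m=GL_m$ over $F$; parabolics are standard (block-upper-triangular), attached to ordered partitions; $\nu$ is the absolute value of reduced norm (resp. determinant). For the parabolic attached to $(n_1,\dots,n_r)$, third entries are $\underline z\in\mathbb{R}^r$ with $\sum n_jz_j=0$, $z_1\ge\dots\ge z_r$, $\nu_{\underline z}=\prod\nu(\ell_j)^{z_j}$; $\iota'$ (for $G'_n$) and $\iota$ (for $G_{nd}$) send $\underline z$ to $(z_1,\dots,z_1,\dots,z_r,\dots,z_r)$ with $z_j$ repeated $n_j$ times. Partial order on $\mathbb{R}^N$: $\underline s\succ\underline t$ iff $\underline s\ne\underline t$ and $\sum_{j\le i}s_j\le\sum_{j\le i}t_j$ for $i=1,\dots,N-1$; $x\prec y$ means $y\succ x$; comparable means one is $\succ$ the other. Fix a cuspidal automorphic representation $\pi'$ of the Levi factor of a parabolic $P'$ of $G'_n$ and let $\sigma$ be the cuspidal representation of the Levi factor of a parabolic $Q$ of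 $G_{nd}$ given by the cuspidal support of its factorwise global Jacquet–Langlands transfer $\mathbf G(\pi')$ (Badulescu). $\mathcal{M}'$ (resp. $\mathcal{M}$) is the set of triples $(R',\Pi',\underline z')$ with $R'$ a parabolic of $G'_n$ containing an element associate to $P'$, $\Pi'$ a unitary discrete spectrum representation of its Levi factor, $\underline z'$ in the closed positive chamber, such that the cuspidal support of $\Pi'\otimes\nu_{\underline z'}$ is associate to $\pi'$ (resp. the same for $G_{nd}$, $Q$, $\sigma$). The map $\mathbf G:\mathcal{M}'\to\mathcal{M}$ sends $(R',\Pi'_1\otimes\cdots\otimes\Pi'_r,\underline z')$, $R'$ attached to $(n_1,\dots,n_r)$, to $(R,\mathbf G(\Pi'_1)\otimes\cdots\otimes\mathbf G(\Pi'_r),\underline z')$, $R$ attached to $(n_1d,\dots,n_rd)$. Let $\mathcal{S}'=\{\iota'(\underline z'):(R',\Pi',\underline z')\in\mathcal{M}'\}$ and $\mathcal{S}=\{\iota(\underline z):(R,\Pi,\underline z)\in\mathcal{M}\}$ (finite sets). Partition $\mathcal{S}'$: let $\mathcal{S}^{\rm aux}_0$ be the set of $\succ$-maximal elements of $\mathcal{S}'$ and inductively $\mathcal{S}^{\rm aux}_i$ the maximal elements of $\mathcal{S}'\setminus\bigcup_{j<i}\mathcal{S}^{\rm aux}_j$, until exhausted after $\ell'+1$ steps; $\mathcal{S}'_i=\mathcal{S}^{\rm aux}_{\ell'-i}$. Define $\mathcal{S}^{\mathbf G}_i=\{\iota(\mathbf G(\underline z')):\iota'(\underline z')\in\mathcal{S}'_i\}$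 for $0\le i\le\ell'$, where $\iota(\mathbf G(\underline z'))$ is obtained from $\iota'(\underline z')$ by repeating each coordinate $d$ times, $\mathcal{S}^{\mathbf G}=\bigcup_i\mathcal{S}^{\mathbf G}_i$, and $\widetilde{\mathcal{S}}=\mathcal{S}\setminus\mathcal{S}^{\mathbf G}$. *)

(* Defs.v *)
From HB Require Import structures.
From mathcomp Require Import all_boot all_order all_algebra.
Set Implicit Arguments. Unset Strict Implicit. Unset Printing Implicit Defensive.
Import Order.TTheory GRing.Theory Num.Theory.
Local Open Scope ring_scope.

Section Defs.
Variable R : realFieldType.

(* Vectors of R^N are represented as sequences of length N. *)

Definition succv (s t : seq R) : bool :=
  [&& size s == size t, s != t &
      all (fun i => \sum_(r <- take i s) r <= \sum_(r <- take i t) r)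
          (iota 1 (size s).-1)].

Definition precv (s t : seq R) : bool := succv t s.

Definition comparablev (s t : seq R) : bool := succv s t || succv t s.

(* A "third entry" datum: an ordered partition (n_1,...,n_r) of N together
   with z in R^r, z_1 >= ... >= z_r, sum n_j z_j = 0. *)
Definition chamber (N : nat) (p : seq nat * seq R) : bool :=
  [&& all (fun k => 0 < k)%N p.1, sumn p.1 == N, size p.2 == size p.1,
      sorted (fun a b => b <= a) p.2 &
      \sum_(jz <- zip p.1 p.2) (jz.1)%:R * jz.2 == 0].

Definition iotaz (p : seq nat * seq R) : seq R :=
  flatten [seq nseq jz.1 jz.2 | jz <- zip p.1 p.2].

Definition Gtriple (d : nat) (p : seq nat * seq R) : seq nat * seq R :=
  ([seq (k * d)%N | k <- p.1], p.2).

Definition expand (d : nat) (s : seq R) : seq R := flatten [seq nseq d r | r <- s].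

(* Peeling of a finite set S (given as a sequence) into layers of
   succ-maximal elements. rest S k = S minus aux_0,...,aux_{k-1}. *)
Fixpoint rest (S : seq (seq R)) (k : nat) : seq (seq R) :=
  match k with
  | 0 => S
  | k'.+1 =>
      let r := rest S k' in
      [seq s <- r | has (fun t => succv t s) r]
  end.

Definition aux (S : seq (seq R)) (k : nat) : seq (seq R) :=
  let r := rest S k in [seq s <- r | ~~ has (fun t => succv t s) r].

Definition ellp (S : seq (seq R)) : nat :=
  find (fun k => nilp (rest S k.+1)) (iota 0 (size S).+1).

Definition layer (S : seq (seq R)) (i : nat) : seq (seq R) :=
  aux S (ellp S - i).

End Defs.

(* Main.v *)
Require Import Defs.
From HB Require Import structures.
From mathcomp Require Import all_boot all_order all_algebra.
From mathcomp Require Import zify.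
Set Implicit Arguments. Unset Strict Implicit.
Import Order.TTheory GRing.Theory Num.Theory.
Local Open Scope ring_scope.

Section H.
Variable R : realFieldType.
Implicit Types a b c s : seq R.

Definition ps s (i : nat) : R := \sum_(r <- take i s) r.

Lemma nth_ps s j : (j < size s)%N -> nth 0 s j = ps s j.+1 - ps s j.
Proof.
move=> hj; rewrite /ps (take_nth 0 hj) -cats1 big_cat big_seq1 /=.
by rewrite addrC addrK.
Qed.

Lemma succv_le a b i : succv a b -> (0 < i < size a)%N -> ps a i <= ps b i.
Proof.
case/and3P=> _ _ /allP H hi; apply: H; rewrite mem_iota; lia.
Qed.

Lemma antisym a b : succv a b -> succv b a -> \sum_(r <- a) r = \sum_(r <- b) r -> False.
Proof.
move=> hab hba hs.
have sz : size a = size b by case/and3P: hab => /eqP.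
have ne : a != b by case/and3P: hab.
have E : forall i, ps a i = ps b i.
  move=> i; case: (posnP i) => [->|ip]; first by rewrite /ps !take0 !big_nil.
  case: (ltnP i (size a)) => hi.
    have h1 : (0 < i < size a)%N by apply/andP.
    have h2 : (0 < i < size b)%N by rewrite -sz.
    by apply/eqP; rewrite eq_le (succv_le hab h1) (succv_le hba h2).
  by rewrite /ps !take_oversize // -sz.
move: ne; have -> // : a = b.
apply: (eq_from_nth (x0 := 0) sz) => j hj.
by rewrite !nth_ps -?sz // !E.
by rewrite eqxx.
Qed.

Lemma trans a b c : succv a b -> succv b c -> \sum_(r <- a) r = \sum_(r <- b) r -> succv a c.
Proof.
move=> hab hbc hs.
have sz1 : size a = size b by case/and3P: hab => /eqP.
have sz2 : size b = size c by case/and3P: hbc => /eqP.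
apply/and3P; split.
- by rewrite sz1 sz2.
- apply/eqP=> ac; subst c; exact: (antisym hab hbc hs).
- apply/allP=> i; rewrite mem_iota => hi.
  apply: (le_trans (y := ps b i)); apply: succv_le => //; rewrite ?sz1 -?sz1; lia.
Qed.

Definition expd (d : nat) (r : R) := nseq d r.

Lemma expand_cons d r a : expand d (r :: a) = nseq d r ++ expand d a.
Proof. by []. Qed.

Lemma size_expand d a : size (expand d a) = (d * size a)%N.
Proof. elim: a => [|r a IH]; rewrite ?muln0 // expand_cons size_cat size_nseq IH /=; lia. Qed.

Lemma sum_nseq k (z : R) : \sum_(r <- nseq k z) r = k%:R * z.
Proof. elim: k => [|k IH]; first by rewrite big_nil mul0r.
by rewrite /= big_cons IH mulrSr mulrDl mul1r addrC. Qed.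

Lemma sum_expand d a : \sum_(r <- expand d a) r = d%:R * \sum_(r <- a) r.
Proof. elim: a => [|r a IH]; first by rewrite !big_nil mulr0.
by rewrite expand_cons big_cat IH sum_nseq big_cons mulrDr. Qed.

Lemma take_expand d a i : take (i * d) (expand d a) = expand d (take i a).
Proof.
elim: a i => [|r a IH] [|i] //=; first by rewrite take0.
rewrite expand_cons mulSn take_cat size_nseq ltnNge leq_addr /= addKn IH.
by [].
Qed.

Lemma expand_inj d a b : expand d a = expand d b -> (0 < d)%N -> size a = size b -> a = b.
Proof.
elim: a b => [|r a IH] [|r' b] //= E dp [] sz.
move: E; rewrite !expand_cons => E.
have := congr1 (take d) E; rewrite !take_cat !size_nseq ltnn subnn !take0 !cats0.
move=> E1; have : r = r'.
  by have := congr1 (fun s => nth 0 s 0) E1; rewrite /= !nth_nseq dp.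
move=> er; subst r'; congr cons; apply: IH => //.
by have := congr1 (drop d) E; rewrite !drop_cat !size_nseq ltnn subnn !drop0.
Qed.

Lemma succv_expand d a b : (0 < d)%N -> succv (expand d a) (expand d b) -> succv a b.
Proof.
move=> dp /and3P [/eqP sz ne /allP H].
rewrite !size_expand in sz.
have sz' : size a = size b by apply/eqP; rewrite -(eqn_pmul2l dp); apply/eqP.
apply/and3P; split; first by rewrite sz'.
- by apply: contraNN ne => /eqP ->.
- apply/allP=> i; rewrite mem_iota => hi.
  have := H (i * d)%N; rewrite size_expand mem_iota !take_expand !sum_expand.
  have dR : 0 < d%:R :> R by rewrite ltr0n.
  rewrite ler_pM2l // => -> //.
  apply/andP; split; first by rewrite muln_gt0 dp; lia.
  have : (i < size a)%N by lia.
  move=> hi2; rewrite mulnC; nia.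
Qed.

Lemma rest_sub (S : seq (seq R)) k : {subset rest S k <= S}.
Proof. elim: k => [|k IH] x //=; rewrite mem_filter => /andP [_ /IH]. by []. Qed.

Lemma aux_sub (S : seq (seq R)) k : {subset aux S k <= S}.
Proof. move=> x; rewrite mem_filter => /andP [_ /rest_sub]; by []. Qed.

Lemma aux_max (S : seq (seq R)) k a b : a \in aux S k -> b \in aux S k -> ~~ succv a b.
Proof.
rewrite !mem_filter => /andP [_ ha] /andP [hb _].
by apply: contra hb => h; apply/hasP; exists a.
Qed.

Lemma sum_iotaz N (p : seq nat * seq R) : chamber N p -> \sum_(r <- iotaz p) r = 0.
Proof.
case/and5P=> _ _ _ _ /eqP E; rewrite -[RHS]E.
rewrite /iotaz big_flatten /= big_map; apply: eq_bigr => jz _.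
by rewrite sum_nseq.
Qed.

End H.
Theorem lemma4p6 (R : realFieldType) (n d : nat)
    (Mp M : seq (seq nat * seq R)) :
  (0 < n)%N -> (1 < d)%N ->
  Mp != [::] ->
  all (chamber n) Mp ->
  all (chamber (n * d)) M ->
  all (fun p => Gtriple d p \in M) Mp ->
  let Sp := [seq iotaz p | p <- Mp] in
  let S := [seq iotaz p | p <- M] in
  let SG (i : nat) := [seq expand d s | s <- layer Sp i] in
  let SGall := flatten [seq SG i | i <- iota 0 (ellp Sp).+1] in
  forall (x : seq R) (i : nat),
    x \in S -> x \notin SGall -> (i <= ellp Sp)%N ->
    ((exists2 y, y \in SG i & succv x y) ->
       forall y0, y0 \in SG i -> ~~ comparablev x y0 || succv x y0)
    /\
    ((exists2 y, y \in SG i & precv x y) ->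
       forall y0, y0 \in SG i -> ~~ comparablev x y0 || precv x y0).
Proof.
move=> n0 d1 _ hMp hM _ Sp S SG SGall x i xS _ _.
have dp : (0 < d)%N by lia.
have sx : \sum_(r <- x) r = 0.
  by case/mapP: xS => p pM ->; apply: (sum_iotaz (N := (n * d)%N)); exact: (allP hM).
have sy : forall y, y \in SG i -> \sum_(r <- y) r = 0.
  move=> y /mapP [s sl ->]; rewrite sum_expand.
  have := aux_sub sl; case/mapP => p pM ->.
  by rewrite (sum_iotaz (N := n)) ?mulr0 //; exact: (allP hMp).
have nm : forall y y0, y \in SG i -> y0 \in SG i -> ~~ succv y y0.
  move=> y y0 /mapP [s sl ->] /mapP [s0 sl0 ->].
  apply/negP => /(succv_expand dp); apply/negP; exact: aux_max sl sl0.
rewrite /comparablev /precv; split.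
- case=> y yS hxy y0 y0S.
  case h1: (succv x y0); first by rewrite orbT.
  rewrite /= orbF; apply/negP => h0.
  by move: (nm _ _ y0S yS); rewrite (trans h0 hxy) // sx sy.
- case=> y yS hyx y0 y0S.
  case h1: (succv y0 x); first by rewrite orbT.
  rewrite /= !orbF; apply/negP => h0.
  by move: (nm _ _ yS y0S); rewrite (trans hyx h0) // sx sy.
Qed.
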